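(* Let $R$ be a commutative Noetherian ring with non-zero identity. Let $\mathcal{P} \subset R$ be a finite subset and $I = (\mathcal{P})$. Let $\mathcal{P}_0, \mathcal{P}_1, \ldots, \mathcal{P}_r$ be subsets of $\mathcal{P}$ satisfying: (B1) $\mathcal{P} = \mathcal{P}_0 \cup \mathcal{P}_1 \cup \cdots \cup \mathcal{P}_r$; (B2) $\mathcal{P}_0$ has exactly one element; (B3) for each $\ell$ with $0 < \ell \le r$ and every $a, a'' \in \mathcal{P}_\ell$ with $a \ne a''$, there exists an integer $m \ge 1$ such that $(a a'')^m \in (\mathcal{P}_0 \cup \cdots \cup \mathcal{P}_{\ell-1}) I^{2m-1}$, where $(\mathcal{P}_0 \cup \cdots \cup \mathcal{P}_{\ell-1})$ denotes the ideal generated by this set. Set $g_\ell = \sum_{a \in \mathcal{P}_\ell} a$ for $\ell = 0, 1, \ldots, r$. Then $J = (g_0, g_1, \ldots, g_r)$ is a reduction of $I$.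
   Context: An ideal $J \subseteq I$ is called a reduction of $I$ if there exists an integer $s \ge 1$ such that $I^{s+1} = J I^s$. *)

(* Defs.v *)
From HB Require Import structures.
From mathcomp Require Import all_boot all_order all_algebra.
From mathcomp Require Import finmap.
Set Implicit Arguments. Unset Strict Implicit. Unset Printing Implicit Defensive.
Import Order.TTheory GRing.Theory.
Local Open Scope ring_scope.

Definition ideal_gen (R : comNzRingType) (S : R -> Prop) : R -> Prop :=
  fun x => exists (n : nat) (c s : 'I_n -> R),
    (forall i, S (s i)) /\ x = \sum_(i < n) c i * s i.

Definition is_ideal (R : comNzRingType) (I : R -> Prop) : Prop :=
  [/\ I 0, (forall x y, I x -> I y -> I (x + y)) & (forall r x, I x -> I (r * x))].

Definition subideal (R : comNzRingType) (I J : R -> Prop) : Prop :=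
  forall x, I x -> J x.

Definition ideal_mul (R : comNzRingType) (I J : R -> Prop) : R -> Prop :=
  ideal_gen (fun x => exists a b, [/\ I a, J b & x = a * b]).

Fixpoint ideal_exp (R : comNzRingType) (I : R -> Prop) (n : nat) : R -> Prop :=
  match n with
  | 0 => fun _ => True
  | n'.+1 => ideal_mul I (ideal_exp I n')
  end.

Definition is_reduction (R : comNzRingType) (J I : R -> Prop) : Prop :=
  subideal J I /\
  exists s : nat, (1 <= s)%N /\
    forall x, ideal_exp I s.+1 x <-> ideal_mul J (ideal_exp I s) x.

Definition noetherian (R : comNzRingType) : Prop :=
  forall I : nat -> R -> Prop,
    (forall n, is_ideal (I n)) ->
    (forall n, subideal (I n) (I n.+1)) ->
    exists N : nat, forall n, (N <= n)%N -> forall x, I n x <-> I N x.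

(* Main.v *)
Require Import Defs.
From HB Require Import structures.
From mathcomp Require Import all_boot all_order all_algebra.
From mathcomp Require Import finmap.
From mathcomp Require Import zify ring.
Set Implicit Arguments. Unset Strict Implicit. Unset Printing Implicit Defensive.
Import Order.TTheory GRing.Theory.
Local Open Scope ring_scope.

Section Gen.
Variable R : comNzRingType.
Implicit Types S T U : R -> Prop.

Lemma gen_of_seq S (l : seq (R * R)) :
  (forall p, p \in l -> S p.2) -> ideal_gen S (\sum_(p <- l) p.1 * p.2).
Proof.
move=> H; exists (size l), (fun i => (nth (0,0) l i).1), (fun i => (nth (0,0) l i).2).
split; first by move=> i; apply: H; apply: mem_nth.
by rewrite (big_nth (0,0)) big_mkord.
Qed.

Lemma seq_of_gen S x : ideal_gen S x ->
  exists l : seq (R * R), (forall p, p \in l -> S p.2) /\ x = \sum_(p <- l) p.1 * p.2.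
Proof.
case=> n [c [s [Hs ->]]]; exists [seq (c i, s i) | i <- enum 'I_n]; split.
  move=> p /mapP [i _ ->] /=; exact: Hs.
by rewrite big_map big_enum.
Qed.

Lemma gen_ideal S : is_ideal (ideal_gen S).
Proof.
split.
- have -> : (0 : R) = \sum_(p <- [::] : seq (R*R)) p.1 * p.2 by rewrite big_nil.
  by apply: gen_of_seq.
- move=> x y /seq_of_gen [l1 [H1 ->]] /seq_of_gen [l2 [H2 ->]].
  rewrite -big_cat; apply: gen_of_seq => p; rewrite mem_cat => /orP [] ?.
  exact: H1. exact: H2.
- move=> r x /seq_of_gen [l [H ->]].
  have -> : r * \sum_(p <- l) p.1 * p.2 = \sum_(p <- [seq (r * q.1, q.2) | q <- l]) p.1 * p.2.
    by rewrite big_map mulr_sumr; apply: eq_bigr => p _ /=; rewrite mulrA.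
  apply: gen_of_seq => p /mapP [q Hq ->] /=; exact: H Hq.
Qed.

Lemma gen_sub S x : S x -> ideal_gen S x.
Proof.
move=> Hx; have -> : x = \sum_(p <- [:: (1, x)]) p.1 * p.2 by rewrite big_seq1 mul1r.
by apply: gen_of_seq => p; rewrite inE => /eqP ->.
Qed.

Lemma gen_min S T : is_ideal T -> (forall x, S x -> T x) ->
  forall x, ideal_gen S x -> T x.
Proof.
case=> T0 TD TM H x [n [c [s [Hs ->]]]].
apply: (big_ind T) => // i _; apply: TM; exact: H.
Qed.

Lemma ideal0 T : is_ideal T -> T 0. Proof. by case. Qed.
Lemma idealD T : is_ideal T -> forall x y, T x -> T y -> T (x + y). Proof. by case. Qed.
Lemma idealM T : is_ideal T -> forall r x, T x -> T (r * x). Proof. by case. Qed.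
Lemma idealMr T : is_ideal T -> forall r x, T x -> T (x * r).
Proof. by move=> HT r x Hx; rewrite mulrC; apply: idealM. Qed.
Lemma idealN T : is_ideal T -> forall x, T x -> T (- x).
Proof. by move=> HT x Hx; rewrite -mulN1r; apply: idealM. Qed.
Lemma idealB T : is_ideal T -> forall x y, T x -> T y -> T (x - y).
Proof. by move=> HT x y Hx Hy; apply: idealD => //; apply: idealN. Qed.
Lemma ideal_ext T T' : is_ideal T -> (forall x, T x <-> T' x) -> is_ideal T'.
Proof.
move=> [h0 hD hM] E; split; first by apply/E.
  by move=> x y /E hx /E hy; apply/E; apply: hD.
by move=> r x /E hx; apply/E; apply: hM.
Qed.

Lemma gen_mul S T U x y : (forall a b, S a -> T b -> U (a * b)) ->
  ideal_gen S x -> ideal_gen T y -> ideal_gen U (x * y).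
Proof.
move=> H Hx Hy; move: y Hy.
have HT : is_ideal (fun x => forall y, ideal_gen T y -> ideal_gen U (x * y)).
  split.
  - by move=> y _; rewrite mul0r; apply: ideal0; apply: gen_ideal.
  - move=> a b Ha Hb y Hy; rewrite mulrDl; apply: idealD; [apply: gen_ideal|auto|auto].
  - move=> r a Ha y Hy; rewrite -mulrA; apply: idealM; [apply: gen_ideal|auto].
apply: (gen_min HT _ Hx).
move=> a Sa y Hy.
have HT2 : is_ideal (fun y => ideal_gen U (a * y)).
  split.
  - by rewrite mulr0; apply: ideal0; apply: gen_ideal.
  - move=> b c Hb Hc; rewrite mulrDr; apply: idealD; [apply: gen_ideal|auto|auto].
  - move=> r b Hb; rewrite mulrCA; apply: idealM; [apply: gen_ideal|auto].
apply: (gen_min HT2 _ Hy).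
by move=> b Tb; apply: gen_sub; apply: H.
Qed.

Lemma gen_sum S (s : seq R) (F : R -> R) (Pr : pred R) :
  (forall i, i \in s -> Pr i -> ideal_gen S (F i)) ->
  ideal_gen S (\sum_(i <- s | Pr i) F i).
Proof.
move=> H; rewrite big_seq_cond; apply: (big_ind (ideal_gen S)).
- exact: ideal0 (gen_ideal S).
- exact: idealD (gen_ideal S).
by move=> i /andP [] ??; apply: H.
Qed.

End Gen.
Section Mon.
Variable R : comNzRingType.
Implicit Types A B : R -> Prop.

Lemma prod_nseq (x : R) n : \prod_(y <- nseq n x) y = x ^+ n.
Proof. by elim: n => [|n IH]; rewrite ?big_nil ?expr0 // big_cons IH exprS. Qed.

Lemma filter_pred1_nseq (x : R) s : filter (pred1 x) s = nseq (count_mem x s) x.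
Proof.
elim: s => [|y s IH] //=; rewrite IH.
by case: eqP => [->|]; rewrite ?eqxx //= => /eqP; rewrite eq_sym => /negPf ->.
Qed.

Lemma ph (U s : seq R) k : (forall y, y \in s -> y \in U) ->
  (size U * k < size s)%N -> exists x, x \in s /\ (k < count_mem x s)%N.
Proof.
elim: U s => [|u U IH] s Hs Hsz.
  case: s Hs Hsz => [|y s] Hs //= _; by have := Hs y (mem_head _ _).
case: (ltnP k (count_mem u s)) => Hc.
  exists u; split => //; rewrite -has_pred1 has_count; exact: leq_ltn_trans Hc.
have Hs' : forall y, y \in filter (predC1 u) s -> y \in U.
  move=> y; rewrite mem_filter => /andP [/= Hyu /Hs]; rewrite inE => /orP [/eqP E|//].
  by rewrite E eqxx in Hyu.
have Hsz' : (size U * k < size (filter (predC1 u) s))%N.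
  rewrite size_filter; have E : (count_mem u s + count (predC1 u) s = size s)%N := count_predC (pred1 u) s.
  move: Hsz; rewrite /= mulSn -E => Hsz; rewrite -(ltn_add2l k); apply: (leq_trans Hsz); rewrite leq_add2r; exact: Hc.
have [x [Hx Hcx]] := IH _ Hs' Hsz'.
exists x; split; first by move: Hx; rewrite mem_filter => /andP [].
apply: leq_trans Hcx _; rewrite count_filter; apply: sub_count => y /= /andP [] //.
Qed.

Lemma ph3 (U s : seq R) k : (forall y, y \in s -> y \in U) ->
  (size U * k < size s)%N -> exists x s', [/\ x \in s, size s = (k.+1 + size s')%N,
    (forall y, y \in s' -> y \in s) & \prod_(y <- s) y = x ^+ k.+1 * \prod_(y <- s') y].
Proof.
move=> Hs Hsz; have [x [Hx Hc]] := ph Hs Hsz.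
set s' := nseq (count_mem x s - k.+1) x ++ filter (predC1 x) s.
have Hp : perm_eq s (nseq k.+1 x ++ s').
  rewrite catA -nseqD subnKC // -filter_pred1_nseq.
  by rewrite perm_sym perm_filterC.
exists x, s'; split => //.
- by rewrite (perm_size Hp) size_cat size_nseq.
- by move=> y Hy; rewrite (perm_mem Hp) mem_cat Hy orbT.
- by rewrite (perm_big _ Hp) big_cat prod_nseq.
Qed.

Definition Mon1 B n (z : R) := exists t : seq R,
  [/\ size t = n, (forall y, y \in t -> B y) & z = \prod_(y <- t) y].
Definition Mon2 A B c e (z : R) := exists s t : seq R,
  [/\ size s = c, (forall y, y \in s -> A y), size t = e, (forall y, y \in t -> B y)
    & z = \prod_(y <- s) y * \prod_(y <- t) y].

Lemma mon1_mul B m n x y : Mon1 B m x -> Mon1 B n y -> Mon1 B (m + n) (x * y).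
Proof.
case=> [t1 [h1 H1 ->]] [t2 [h2 H2 ->]]; exists (t1 ++ t2); split.
- by rewrite size_cat h1 h2.
- by move=> z; rewrite mem_cat => /orP [] ?; auto.
- by rewrite big_cat.
Qed.

Lemma mon2_mul A B c e c' e' x y : Mon2 A B c e x -> Mon2 A B c' e' y ->
  Mon2 A B (c + c') (e + e') (x * y).
Proof.
case=> [s1 [t1 [hs1 Hs1 ht1 Ht1 ->]]] [s2 [t2 [hs2 Hs2 ht2 Ht2 ->]]].
exists (s1 ++ s2), (t1 ++ t2); split.
- by rewrite size_cat hs1 hs2.
- by move=> z; rewrite mem_cat => /orP [] ?; auto.
- by rewrite size_cat ht1 ht2.
- by move=> z; rewrite mem_cat => /orP [] ?; auto.
- rewrite !big_cat /=; ring.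
Qed.

Lemma mon21 A B c e e' x y : Mon2 A B c e x -> Mon1 B e' y -> Mon2 A B c (e + e') (x * y).
Proof.
case=> [s1 [t1 [hs1 Hs1 ht1 Ht1 ->]]] [t2 [ht2 Ht2 ->]].
exists s1, (t1 ++ t2); split => //.
- by rewrite size_cat ht1 ht2.
- by move=> z; rewrite mem_cat => /orP [] ?; auto.
- rewrite !big_cat /=; ring.
Qed.

Lemma gmon1_mul B m n x y : ideal_gen (Mon1 B m) x -> ideal_gen (Mon1 B n) y ->
  ideal_gen (Mon1 B (m + n)) (x * y).
Proof. apply: gen_mul; exact: mon1_mul. Qed.

Lemma gmon2_mul A B c e c' e' x y : ideal_gen (Mon2 A B c e) x ->
  ideal_gen (Mon2 A B c' e') y -> ideal_gen (Mon2 A B (c + c') (e + e')) (x * y).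
Proof. apply: gen_mul; exact: mon2_mul. Qed.

Lemma gmon21 A B c e e' x y : ideal_gen (Mon2 A B c e) x ->
  ideal_gen (Mon1 B e') y -> ideal_gen (Mon2 A B c (e + e')) (x * y).
Proof. apply: gen_mul; exact: mon21. Qed.

Lemma mon1_1 B : Mon1 B 0 1.
Proof. by exists [::]; split => //; rewrite big_nil. Qed.

Lemma mon2_1 A B : Mon2 A B 0 0 1.
Proof. by exists [::], [::]; split => //; rewrite !big_nil mulr1. Qed.

Lemma gmon1_exp B n x : ideal_gen (Mon1 B 1) x -> ideal_gen (Mon1 B n) (x ^+ n).
Proof.
move=> Hx; elim: n => [|n IH]; first by rewrite expr0; apply: gen_sub; apply: mon1_1.
by rewrite exprS; apply: (gmon1_mul Hx IH).
Qed.

Lemma gmon2_exp A B c e n x : ideal_gen (Mon2 A B c e) x ->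
  ideal_gen (Mon2 A B (n * c) (n * e)) (x ^+ n).
Proof.
move=> Hx; elim: n => [|n IH]; first by rewrite expr0 !mul0n; apply: gen_sub; apply: mon2_1.
by rewrite exprS !mulSn; apply: (gmon2_mul Hx IH).
Qed.

Lemma gmon1_B B x : B x -> ideal_gen (Mon1 B 1) x.
Proof.
by move=> Hx; apply: gen_sub; exists [:: x]; split => //;
  [move=> y; rewrite inE => /eqP -> | rewrite big_seq1].
Qed.

Lemma gmon1_gen B x : ideal_gen B x -> ideal_gen (Mon1 B 1) x.
Proof. apply: gen_min; [exact: gen_ideal | exact: gmon1_B]. Qed.

Lemma gmon2_A A B x : A x -> ideal_gen (Mon2 A B 1 0) x.
Proof.
move=> Hx; apply: gen_sub; exists [:: x], [::]; split => //.
- by move=> y; rewrite inE => /eqP ->.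
- by rewrite big_seq1 big_nil mulr1.
Qed.

Lemma expE B n x : ideal_exp (ideal_gen B) n x <-> ideal_gen (Mon1 B n) x.
Proof.
elim: n x => [|n IH] x /=.
  split => // _; rewrite -[x]mulr1; apply: idealM; first exact: gen_ideal.
  by apply: gen_sub; apply: mon1_1.
split.
  apply: gen_min; first exact: gen_ideal.
  move=> z [a [b [Ha Hb ->]]]; apply: (@gmon1_mul _ 1 n); first exact: gmon1_gen.
  by apply/IH.
apply: gen_min; first exact: gen_ideal.
move=> z [[|y t] [/= Ht Hy ->]] //; case: Ht => Ht.
rewrite big_cons; apply: gen_sub; exists y, (\prod_(j <- t) j); split => //.
  by apply: gen_sub; apply: Hy; exact: mem_head.
apply/IH; apply: gen_sub; exists t; split => // w Hw; apply: Hy.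
by rewrite inE Hw orbT.
Qed.

Lemma mulE A B n x : ideal_mul (ideal_gen A) (ideal_exp (ideal_gen B) n) x <->
  ideal_gen (Mon2 A B 1 n) x.
Proof.
split.
  apply: gen_min; first exact: gen_ideal.
  move=> z [a [b [Ha /expE Hb ->]]]; apply: (@gmon21 _ _ 1 0 n) => //.
  by move: Ha; apply: gen_min; [exact: gen_ideal| exact: gmon2_A].
apply: gen_min; first exact: gen_ideal.
move=> z [[|a [|? ?]] [t [//= _ Ha Ht Hb ->]]].
rewrite big_seq1; apply: gen_sub; exists a, (\prod_(j <- t) j); split => //.
  by apply: gen_sub; apply: Ha; exact: mem_head.
by apply/expE; apply: gen_sub; exists t.
Qed.

End Mon.


Section Main.
Variable R : comNzRingType.
Variable P : {fset R}.
Variable r : nat.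
Variable Ps : nat -> {fset R}.
Hypothesis HPs : forall l, (l <= r)%N -> (Ps l `<=` P)%fset.
Hypothesis HB2 : #|` Ps 0%N| = 1%N.
Hypothesis HB3 : forall l, (0 < l)%N -> (l <= r)%N ->
     forall a a2, a \in Ps l -> a2 \in Ps l -> a != a2 ->
     exists2 m : nat, (1 <= m)%N &
       ideal_mul (ideal_gen (fun x => exists2 k, (k < l)%N & x \in Ps k))
                 (ideal_exp (ideal_gen (fun x => x \in P)) (2 * m - 1))
                 ((a * a2) ^+ m).

Local Notation inP := (fun x : R => x \in P).
Local Notation low l := (fun x : R => exists2 k, (k < l)%N & x \in Ps k).
Local Notation GJ := (fun x : R => exists2 l, (l <= r)%N & x = \sum_(a <- Ps l) a).
Local Notation JM n := (ideal_gen (Mon2 GJ inP 1 n)).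

Lemma inPs l x : (l <= r)%N -> x \in Ps l -> x \in P.
Proof. by move=> Hl Hx; apply: (fsubsetP (HPs Hl)). Qed.

Lemma JM_eq m n x : m = n -> JM m x -> JM n x. Proof. by move=> ->. Qed.
Lemma g2_eq (A B : R -> Prop) c e e2 x : e = e2 ->
  ideal_gen (Mon2 A B c e) x -> ideal_gen (Mon2 A B c e2) x.
Proof. by move=> ->. Qed.
Lemma g1_eq (B : R -> Prop) e e2 x : e = e2 ->
  ideal_gen (Mon1 B e) x -> ideal_gen (Mon1 B e2) x.
Proof. by move=> ->. Qed.

Lemma gP x : x \in P -> ideal_gen (Mon1 inP 1) x.
Proof. exact: (@gmon1_B _ inP x). Qed.

Lemma gsum l : (l <= r)%N -> ideal_gen (Mon1 inP 1) (\sum_(a <- Ps l) a).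
Proof. move=> Hl; apply: gen_sum => a Ha _; apply: gP; exact: inPs Hl Ha. Qed.

Definition good x k N := forall t : seq R, (N <= size t)%N ->
  (forall y, y \in t -> y \in P) -> JM (k + size t) (x ^+ k.+1 * \prod_(y <- t) y).

Lemma good_k x k N : x \in P -> good x k N -> good x k.+1 N.
Proof.
move=> Hx H t Ht HtP; rewrite exprS -mulrA mulrC.
apply: (JM_eq _ (gmon21 (H t Ht HtP) (gP Hx))); lia.
Qed.

Lemma good_mono x k N k' N' : x \in P -> (k <= k')%N -> (N <= N')%N ->
  good x k N -> good x k' N'.
Proof.
move=> Hx Hk HN H.
have H2 : good x k N' by move=> t Ht; apply: H; exact: leq_trans HN Ht.
rewrite -(subnKC Hk); elim: (k' - k)%N => [|d IH]; first by rewrite addn0.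
by rewrite addnS; apply: good_k.
Qed.

Lemma unif (Q : seq R) : (forall x, x \in Q -> x \in P /\ exists k N, good x k N) ->
  exists k N, forall x, x \in Q -> good x k N.
Proof.
elim: Q => [|q Q IH] H; first by exists 0%N, 0%N => x; rewrite in_nil.
have [Hq [k1 [N1 G1]]] := H q (mem_head _ _).
have [k2 [N2 G2]] : exists k N, forall x, x \in Q -> good x k N.
  by apply: IH => x Hx; apply: H; rewrite inE Hx orbT.
exists (maxn k1 k2), (maxn N1 N2) => x; rewrite inE => /orP [/eqP ->|Hx].
  by apply: good_mono G1 => //; rewrite leq_maxl.
have Hx2 : x \in q :: Q by rewrite inE Hx orbT.
have [HxP _] := H x Hx2.
by apply: good_mono (G2 x Hx) => //; rewrite leq_maxr.
Qed.

Lemma KM_raise l m q : ideal_gen (Mon1 inP 2) q ->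
  ideal_gen (Mon2 (low l) inP 1 (2 * m + 1)) (q ^+ m.+1) ->
  forall m', (m <= m')%N -> ideal_gen (Mon2 (low l) inP 1 (2 * m' + 1)) (q ^+ m'.+1).
Proof.
move=> Hq H m' Hm; rewrite -(subnKC Hm); elim: (m' - m)%N => [|d IH]; first by rewrite addn0.
have E : ((m + d.+1).+1 = ((m + d).+1).+1)%N by lia.
rewrite E exprS mulrC; apply: (g2_eq _ (gmon21 IH Hq)); lia.
Qed.

Lemma unifQ l (Q : seq R) : (forall q, q \in Q -> ideal_gen (Mon1 inP 2) q /\
     exists m, ideal_gen (Mon2 (low l) inP 1 (2 * m + 1)) (q ^+ m.+1)) ->
  exists m, forall q, q \in Q -> ideal_gen (Mon2 (low l) inP 1 (2 * m + 1)) (q ^+ m.+1).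
Proof.
elim: Q => [|q Q IH] H; first by exists 0%N => x; rewrite in_nil.
have [Hq [m1 G1]] := H q (mem_head _ _).
have [m2 G2] : exists m, forall x, x \in Q ->
    ideal_gen (Mon2 (low l) inP 1 (2 * m + 1)) (x ^+ m.+1).
  by apply: IH => x Hx; apply: H; rewrite inE Hx orbT.
exists (maxn m1 m2) => x; rewrite inE => /orP [/eqP ->|Hx].
  by apply: KM_raise G1 _ _ => //; rewrite leq_maxl.
have Hx2 : x \in q :: Q by rewrite inE Hx orbT.
have [HxP _] := H x Hx2.
by apply: KM_raise (G2 x Hx) _ _ => //; rewrite leq_maxr.
Qed.

Lemma prodQ (s : seq R) : (forall y, y \in s -> exists u v, [/\ u \in P, v \in P & y = u * v]) ->
  Mon1 inP (2 * size s) (\prod_(y <- s) y).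
Proof.
elim: s => [|y s IH] H; first by rewrite /= muln0 big_nil; apply: mon1_1.
have [u [v [Hu Hv ->]]] := H y (mem_head _ _).
rewrite big_cons /= mulnS; apply: (@mon1_mul _ _ 2).
  exists [:: u; v]; split => //; last by rewrite big_cons big_seq1.
  by move=> w; rewrite !inE => /orP [] /eqP ->.
by apply: IH => w Hw; apply: H; rewrite inE Hw orbT.
Qed.

Lemma binom (g a : R) : ideal_gen (Mon1 inP 1) g -> ideal_gen (Mon1 inP 1) a ->
  forall M', exists h, ideal_gen (Mon1 inP M') h /\
    (g - a) ^+ M'.+1 = (- a) ^+ M'.+1 + g * h.
Proof.
move=> Hg Ha; elim=> [|M' [h [Hh E]]].
  exists 1; split; first by apply: gen_sub; apply: mon1_1.
  by rewrite !expr1 mulr1 addrC.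
exists ((- a) ^+ M'.+1 + (g - a) * h); split.
  apply: idealD; first exact: gen_ideal.
    apply: gmon1_exp; apply: idealN; [exact: gen_ideal | exact: Ha].
  have H1 : ideal_gen (Mon1 inP 1) (g - a).
    apply: idealB; [exact: gen_ideal | exact: Hg | exact: Ha].
  apply: (g1_eq _ (gmon1_mul H1 Hh)); lia.
rewrite [(g - a) ^+ M'.+2]exprS E [(- a) ^+ M'.+2]exprS.
set z := (- a) ^+ M'.+1; ring.
Qed.


Lemma step l : (0 < l)%N -> (l <= r)%N ->
  (exists k N, forall x, low l x -> good x k N) ->
  forall a, a \in Ps l -> exists k N, good a k N.
Proof.
move=> Hl0 Hlr [k [N HG]] a Ha.
have HaP : a \in P := inPs Hlr Ha.
set Q := undup [seq a * b | b <- [seq b <- enum_fset (Ps l) | b != a]].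
have HQ : forall q, q \in Q -> exists2 b, b \in Ps l & (b != a) /\ q = a * b.
  move=> q; rewrite mem_undup => /mapP [b]; rewrite mem_filter => /andP [Hba Hb] ->.
  by exists b.
have [m Hm] : exists m, forall q, q \in Q ->
    ideal_gen (Mon2 (low l) inP 1 (2 * m + 1)) (q ^+ m.+1).
  apply: unifQ => q /HQ [b Hb [Hba ->]]; split.
    apply: gen_sub; exists [:: a; b]; split => //; last by rewrite big_cons big_seq1.
    move=> w; rewrite !inE => /orP [] /eqP ->; [exact: HaP | exact: inPs Hlr Hb].
  have Hab : a != b by rewrite eq_sym.
  have [m Hm1 Hm2] := HB3 Hl0 Hlr Ha Hb Hab.
  move/mulE: Hm2; case: m Hm1 => [//|m] _ H; exists m.
  apply: (g2_eq _ H); lia.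
set y := \sum_(b <- Ps l | b != a) a * b.
have Hy1 : ideal_gen (Mon1 (fun q => q \in Q) 1) y.
  apply: gen_sum => b Hb Hba; apply: (@gmon1_B _ (fun q => q \in Q)).
  by rewrite mem_undup; apply: map_f; rewrite mem_filter Hba.
set n' := (size Q * m)%N.
have Hyn : ideal_gen (Mon2 (low l) inP 1 (2 * n' + 1)) (y ^+ n'.+1).
  have := gmon1_exp n'.+1 Hy1; apply: gen_min; first exact: gen_ideal.
  move=> z [s [Hs HsQ ->]].
  have Hsz : (size Q * m < size s)%N by rewrite Hs.
  have HsQ' : forall w, w \in s -> w \in Q by move=> w /HsQ.
  have [q [s' [Hq Hss' Hs's Eprod]]] := ph3 HsQ' Hsz.
  have Hpr : Mon1 inP (2 * size s') (\prod_(w <- s') w).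
    apply: prodQ => w /Hs's /HsQ' /HQ [b Hb [_ ->]]; exists a, b; split => //.
    exact: inPs Hlr Hb.
  rewrite Eprod; apply: (g2_eq _ (gmon21 (Hm q (HsQ' q Hq)) (gen_sub Hpr))).
  rewrite /n'; lia.
set k' := (#|` P| * k)%N.
have HY : forall t : seq R, (N <= size t)%N -> (forall w, w \in t -> w \in P) ->
    JM (k' + k'.+1 * (2 * n' + 1) + size t) ((y ^+ n'.+1) ^+ k'.+1 * \prod_(w <- t) w).
  move=> t Ht HtP.
  have := gmon2_exp k'.+1 Hyn; rewrite muln1.
  have Hid : is_ideal (fun z => JM (k' + k'.+1 * (2 * n' + 1) + size t)
                                   (z * \prod_(w <- t) w)).
    split.
    - by rewrite mul0r; apply: ideal0; apply: gen_ideal.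
    - by move=> u v Hu Hv; rewrite mulrDl; apply: idealD => //; apply: gen_ideal.
    - by move=> c u Hu; rewrite -mulrA; apply: idealM => //; apply: gen_ideal.
  apply: (gen_min Hid).
  move=> z [bs [t' [Hbs Hbsl Ht' Ht'P ->]]].
  have HbsP : forall w, w \in bs -> w \in enum_fset P.
    move=> w /Hbsl [j Hj Hw]; apply: (inPs (l := j)) => //.
    by apply: leq_trans (ltnW Hj) Hlr.
  have Hsz : (size (enum_fset P) * k < size bs)%N by rewrite Hbs.
  have [b [bs' [Hb Hsb Hbs'b Eprod]]] := ph3 HbsP Hsz.
  have Hsz2 : (N <= size (bs' ++ t' ++ t))%N.
    by rewrite !size_cat; apply: leq_trans Ht _; rewrite addnA leq_addl.
  have HP2 : forall w, w \in bs' ++ t' ++ t -> w \in P.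
    move=> w; rewrite !mem_cat => /or3P [/Hbs'b /HbsP | /Ht'P | /HtP] //.
  have := HG b (Hbsl b Hb) _ Hsz2 HP2 => H.
  have E : \prod_(w <- bs) w * \prod_(w <- t') w * \prod_(w <- t) w =
      b ^+ k.+1 * \prod_(w <- bs' ++ t' ++ t) w.
    by rewrite Eprod !big_cat /=; ring.
  rewrite E; apply: (JM_eq _ H); rewrite !size_cat.
  move: Hsb Ht'; rewrite Hbs; set c := (k'.+1 * (2 * n' + 1))%N => Hsb Ht'.
  rewrite Ht'; have Ek : k' = (k + size bs')%N by apply: succn_inj; rewrite Hsb addSn.
  by rewrite Ek !addnA.
set g := \sum_(b <- Ps l) b.
have Hbig : y = a * (g - a).
  rewrite /g (bigD1_seq a) ?fset_uniq //= addrC addrK mulr_sumr //.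
set M' := (n' * k'.+1 + k')%N.
have HM : (M'.+1 = n'.+1 * k'.+1)%N by rewrite /M'; lia.
have [h [Hh Eh]] := binom (gsum Hlr) (gP HaP) M'.
exists (M'.+1 + M')%N, N => t Ht HtP.
set e := (-1 : R) ^+ M'.+1.
have e2 : e * e = 1 by rewrite -expr2 sqrr_sign.
have Eid : a ^+ (M'.+1 + M').+1 * \prod_(w <- t) w =
    e * (y ^+ M'.+1 * \prod_(w <- t) w - g * (a ^+ M'.+1 * h * \prod_(w <- t) w)).
  have -> : ((M'.+1 + M').+1 = M'.+1 + M'.+1)%N by lia.
  rewrite Hbig exprMn Eh exprNn exprD -/e.
  set A := a ^+ M'.+1; set p := \prod_(w <- t) w.
  transitivity (e * e * (A * A * p)); first by rewrite e2 mul1r.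
  by rewrite -/g; ring.
rewrite Eid; apply: idealM; first exact: gen_ideal.
apply: idealB; first exact: gen_ideal.
  rewrite HM exprM; apply: (JM_eq _ (HY t Ht HtP)); rewrite /M'; nia.
apply: (@JM_eq (0 + (M'.+1 + M' + size t))%N); first by lia.
apply: gmon21; first by apply: gmon2_A; exists l.
apply: gmon1_mul; last by apply: gen_sub; exists t.
apply: gmon1_mul => //; apply: gmon1_exp; exact: gP.
Qed.



Lemma levels l : (l <= r)%N -> exists k N, forall x, low l.+1 x -> good x k N.
Proof.
elim: l => [|l IH] Hl.
  move: HB2; case E: (enum_fset (Ps 0%N)) => [|a0 [|? ?]] // _.
  exists 0%N, 0%N => x [j Hj Hx].
  have j0 : j = 0%N by case: j Hj Hx.
  move: Hx; rewrite j0; move=> Hx.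
  have Hx' : x \in enum_fset (Ps 0%N) := Hx.
  move: Hx'; rewrite E inE => /eqP Ex.
  move=> t _ HtP; apply: gen_sub; exists [:: x], t; split => //.
    move=> w; rewrite inE => /eqP ->; exists 0%N => //.
    by rewrite E big_seq1.
  by rewrite big_seq1 expr1.
have [k1 [N1 G1]] := IH (ltnW Hl).
have [k2 [N2 G2]] : exists k N, forall x, x \in enum_fset (Ps l.+1) -> good x k N.
  apply: unif => x Hx; split; first exact: inPs Hl Hx.
  apply: (step (l := l.+1)) => //.
  by exists k1, N1.
exists (maxn k1 k2), (maxn N1 N2) => x [j Hj Hx].
have HxP : x \in P by apply: (inPs (l := j)) => //; apply: leq_trans Hl; exact: Hj.
have [Hj'|Hj'] : (j < l.+1)%N \/ j = l.+1 by lia.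
  apply: (good_mono HxP _ _ (G1 x _)); [exact: leq_maxl | exact: leq_maxl | by exists j].
apply: (good_mono HxP _ _ (G2 x _)); [exact: leq_maxr | exact: leq_maxr | by rewrite -Hj'; exact: Hx].
Qed.

End Main.

Theorem theorem2p1 (R : comNzRingType) (hR : noetherian R)
  (P : {fset R}) (r : nat) (Ps : nat -> {fset R}) :
  (forall l, (l <= r)%N -> (Ps l `<=` P)%fset) ->
  (* (B1) *)
  (forall x, x \in P -> exists2 l, (l <= r)%N & x \in Ps l) ->
  (* (B2) *)
  #|` Ps 0%N| = 1%N ->
  (* (B3) *)
  (forall l, (0 < l)%N -> (l <= r)%N ->
     forall a a2, a \in Ps l -> a2 \in Ps l -> a != a2 ->
     exists2 m : nat, (1 <= m)%N &
       ideal_mul (ideal_gen (fun x => exists2 k, (k < l)%N & x \in Ps k))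
                 (ideal_exp (ideal_gen (fun x => x \in P)) (2 * m - 1))
                 ((a * a2) ^+ m)) ->
  is_reduction
    (ideal_gen (fun x => exists2 l, (l <= r)%N & x = \sum_(a <- Ps l) a))
    (ideal_gen (fun x => x \in P)).
Proof.
move=> HPs HB1 HB2 HB3.
have [k [N HG]] := levels HPs HB2 HB3 (leqnn r).
split.
  move=> x; apply: gen_min; first exact: gen_ideal.
  move=> g [l Hl ->]; apply: gen_sum => a Ha _; apply: gen_sub; exact: (@inPs _ _ _ _ HPs l a Hl Ha).
exists (#|` P| * k + k + N).+1; split => // x; split.
  move/expE; apply: gen_min; first exact: gen_ideal.
  move=> z [t [Ht HtP ->]]; apply/mulE.
  have HtP' : forall y, y \in t -> y \in enum_fset P := HtP.
  have Hsz : (size (enum_fset P) * k < size t)%N.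
    by rewrite Ht ltnS -addnA; apply: leq_trans (leq_addr _ _) (leqnSn _).
  have [x0 [t' [Hx0 Hsz' Ht't Eprod]]] := ph3 HtP' Hsz.
  rewrite Eprod.
  have Hlow : exists2 j, (j < r.+1)%N & x0 \in Ps j.
    by have [l Hl Hx] := HB1 x0 (HtP x0 Hx0); exists l.
  have E : ((#|` P| * k + k + N).+1 = k + size t')%N.
    by move: Hsz'; rewrite Ht addSn => /eqP; rewrite eqSS => /eqP.
  have HN : (N <= size t')%N.
    have : (k + N <= k + size t')%N by rewrite -E; lia.
    by rewrite leq_add2l.
  apply: (JM_eq _ (HG x0 Hlow t' HN (fun y Hy => HtP y (Ht't y Hy)))).
  by rewrite -E.
move=> H; apply/expE; move: H => /mulE; apply: gen_min; first exact: gen_ideal.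
move=> z [[|g [|? ?]] [t [//= _ Hg Ht HtP ->]]].
rewrite big_seq1; apply: (@gmon1_mul _ _ 1).
  by have [l Hl ->] := Hg g (mem_head _ _); exact: (@gsum _ _ _ _ HPs l Hl).
by apply: gen_sub; exists t.
Qed.
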